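(* Let $n$ be even and let $N=(P,L)$ be a $6$-net of order $n$ with parallel classes $\Pi_0,\dots,\Pi_5$, and let $\mathcal R$ be a relation on $N$ of type $(\lambda_0,\dots,\lambda_5)$. Put $g_i=\frac n2-\lambda_i$ for $0\le i\le 5$. Then for every binary string $\mathbf b=(b_0,\dots,b_5)$ with an even number of ones, $$t_{\mathbf b}+t_{\bar{\mathbf b}}=\frac{1}{16}n^2+\frac14\sum_{0\le i<j\le 5}(-1)^{b_i+b_j}g_ig_j,$$ where $\bar{\mathbf b}$ is the bitwise complement of $\mathbf b$.
   Context: A $k$-net of order $n$ is a set $P$ of $n^2$ points together with a set $L$ of $kn$ lines (subsets of $P$), each line containing $n$ points and each point lying on $k$ lines, such that $L$ partitions into $k$ parallel classes $\Pi_0,\dots,\Pi_{k-1}$ of $n$ pairwise disjoint lines each, and any two lines from different parallel classes meet in exactly one point. A relation on a net is a set $\mathcal R\subseteq L$ of lines such that every point lies on an even number of lines of $\mathcal R$ (equivalently, the $\mathbb F_2$ incidence vectors of the lines in $\mathcal R$ sum to zero). Its type is $(\lambda_0,\dots,\lambda_{k-1})$ where $\lambda_i=|\mathcal R\cap\Pi_i|$. The type of a point $p$ is the binary string $\mathbf b\in\{0,1\}^k$ with $b_i=1$ iff the line of $\Pi_i$ through $p$ lies in $\mathcal R$; $t_{\mathbf b}$ denotes the number of points of type $\mathbf b$. *)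

(* Defs.v *)
From mathcomp Require Import all_boot all_order all_algebra.
Set Implicit Arguments. Unset Strict Implicit. Unset Printing Implicit Defensive.
Import Order.TTheory GRing.Theory Num.Theory.

Definition is_net (k n : nat) (P : finType) (L : {set {set P}})
    (Pi : 'I_k -> {set {set P}}) : Prop :=
  [/\ #|P| = n ^ 2,
      #|L| = k * n,
      (forall l, l \in L -> #|l| = n) &
      (forall p : P, #|[set l in L | p \in l]| = k)] /\
  [/\
      L = \bigcup_(i < k) Pi i,
      (forall i j : 'I_k, i != j -> [disjoint Pi i & Pi j]),
      (forall i, #|Pi i| = n),
      (forall i l1 l2, l1 \in Pi i -> l2 \in Pi i -> l1 != l2 ->
          [disjoint l1 & l2]) &
      (forall i j l1 l2, i != j -> l1 \in Pi i -> l2 \in Pi j ->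
          #|l1 :&: l2| = 1)].

Definition is_relation (P : finType) (L R : {set {set P}}) : Prop :=
  R \subset L /\ forall p : P, ~~ odd #|[set l in R | p \in l]|.

Definition rel_type (k : nat) (P : finType) (Pi : 'I_k -> {set {set P}})
    (R : {set {set P}}) (i : 'I_k) : nat := #|R :&: Pi i|.

Definition point_type (k : nat) (P : finType) (Pi : 'I_k -> {set {set P}})
    (R : {set {set P}}) (p : P) : {ffun 'I_k -> bool} :=
  [ffun i => [exists l in Pi i, (p \in l) && (l \in R)]].

Definition t_count (k : nat) (P : finType) (Pi : 'I_k -> {set {set P}})
    (R : {set {set P}}) (b : {ffun 'I_k -> bool}) : nat :=
  #|[set p : P | point_type Pi R p == b]|.

Definition bcompl (k : nat) (b : {ffun 'I_k -> bool}) : {ffun 'I_k -> bool} :=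
  [ffun i => ~~ b i].

(* Main.v *)
Require Import Defs.
From mathcomp Require Import all_boot all_order all_algebra.
Import Order.TTheory GRing.Theory Num.Theory.
Local Open Scope ring_scope.

From mathcomp Require Import ring lra.
Set Implicit Arguments. Unset Strict Implicit.
Lemma big6 (R : Type) (idx : R) (op : Monoid.law idx) (F : 'I_6 -> R) :
  \big[op/idx]_(i < 6) F i = op (F (inord 0)) (op (F (inord 1)) (op (F (inord 2))
     (op (F (inord 3)) (op (F (inord 4)) (op (F (inord 5)) idx))))).
Proof.
have -> : \big[op/idx]_(i < 6) F i = \big[op/idx]_(i < 6) F (inord i).
  by apply: eq_bigr => i _; rewrite inord_val.
by rewrite -(big_mkord xpredT (fun k => F (inord k))) /index_iota /= !big_cons big_nil.
Qed.


Lemma dsum6 (G : 'I_6 -> 'I_6 -> rat) :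
  \sum_(i < 6) \sum_(j < 6 | (i < j)%N) G i j =
   G (inord 0) (inord 1) + G (inord 0) (inord 2) + G (inord 0) (inord 3) + G (inord 0) (inord 4) + G (inord 0) (inord 5)
   + G (inord 1) (inord 2) + G (inord 1) (inord 3) + G (inord 1) (inord 4) + G (inord 1) (inord 5)
   + G (inord 2) (inord 3) + G (inord 2) (inord 4) + G (inord 2) (inord 5)
   + G (inord 3) (inord 4) + G (inord 3) (inord 5) + G (inord 4) (inord 5).
Proof.
rewrite big6 !(big_mkcond _ (G _)) !big6 !inordK //=.
rewrite !addr0 !add0r !addrA //.
Qed.

Lemma forall_ffun_eq (c d : {ffun 'I_6 -> bool}) :
  (c == d) = [forall i, c i == d i].
Proof.
by apply/eqP/forallP => [-> i|H]; [ | apply/ffunP => i; apply/eqP].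
Qed.

Lemma card6 (c : 'I_6 -> bool) : #|[set i | c i]| =
  (c (inord 0) + c (inord 1) + c (inord 2) + c (inord 3) + c (inord 4) + c (inord 5))%N.
Proof.
rewrite -sum1dep_card big_mkcond big6 /=.
by case: (c (inord 0)); case: (c (inord 1)); case: (c (inord 2)); case: (c (inord 3)); case: (c (inord 4)); case: (c (inord 5)).
Qed.

Lemma forall6 (P : 'I_6 -> bool) : [forall i, P i] =
  [&& P (inord 0), P (inord 1), P (inord 2), P (inord 3), P (inord 4) & P (inord 5)].
Proof.
rewrite -(big_andE xpredT) big6 /=.
by case: (P (inord 0)); case: (P (inord 1)); case: (P (inord 2)); case: (P (inord 3)); case: (P (inord 4)); case: (P (inord 5)).
Qed.
Lemma par12 (a0 a1 a2 a3 a4 a5 b0 b1 b2 b3 b4 b5 : bool) :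
  ~~ odd (a0 + a1 + a2 + a3 + a4 + a5) -> ~~ odd (b0 + b1 + b2 + b3 + b4 + b5) ->
  ~~ odd ((a0 (+) b0) + (a1 (+) b1) + (a2 (+) b2) + (a3 (+) b3) + (a4 (+) b4) + (a5 (+) b5)).
Proof. by case: a0; case: a1; case: a2; case: a3; case: a4; case: a5;
  case: b0; case: b1; case: b2; case: b3; case: b4; case: b5. Qed.

Lemma pw6 (c0 c1 c2 c3 c4 c5 : bool) (s := fun c : bool => ((-1) ^+ c : rat)) :
  ~~ odd (c0 + c1 + c2 + c3 + c4 + c5) ->
  (([&& ~~ c0, ~~ c1, ~~ c2, ~~ c3, ~~ c4 & ~~ c5] : nat) + ([&& c0, c1, c2, c3, c4 & c5] : nat))%:R =
  1/16 + 1/16 * (s c0 * s c1 + s c0 * s c2 + s c0 * s c3 + s c0 * s c4 + s c0 * s c5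
   + s c1 * s c2 + s c1 * s c3 + s c1 * s c4 + s c1 * s c5
   + s c2 * s c3 + s c2 * s c4 + s c2 * s c5
   + s c3 * s c4 + s c3 * s c5 + s c4 * s c5).
Proof.
rewrite /s; case: c0; case: c1; case: c2; case: c3; case: c4; case: c5 => //= _;
  rewrite ?expr0 ?expr1; lra.
Qed.

Lemma Hcore (c : {ffun 'I_6 -> bool}) : ~~ odd #|[set i | c i]| ->
  (((c == [ffun=> false]) : nat) + ((c == [ffun=> true]) : nat))%:R =
  1/16 + 1/16 * \sum_(i < 6) \sum_(j < 6 | (i < j)%N) (-1) ^+ c i * (-1) ^+ c j :> rat.
Proof.
rewrite card6 dsum6 !forall_ffun_eq !forall6 !ffunE.
have E : forall b : bool, (b == false) = ~~ b by case.
have E' : forall b : bool, (b == true) = b by case.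
rewrite !E !E'; exact: pw6.
Qed.
Section S.
Lemma net_sub (n : nat) (P : finType) (L : {set {set P}}) (Pi : 'I_6 -> {set {set P}}) i l :
  @is_net 6 n P L Pi -> l \in Pi i -> l \in L.
Proof. move=> [_ [-> _ _ _ _]] Hl; apply/bigcupP; by exists i. Qed.

Lemma net_uniq (n : nat) (P : finType) (L : {set {set P}}) (Pi : 'I_6 -> {set {set P}}) i l1 l2 p :
  @is_net 6 n P L Pi -> l1 \in Pi i -> l2 \in Pi i -> p \in l1 -> p \in l2 -> l1 = l2.
Proof.
move=> [_ [_ _ _ Hd _]] H1 H2 p1 p2; apply/eqP; apply/negPn/negP => ne.
by move: (disjointFr (Hd _ _ _ H1 H2 ne) p1); rewrite p2.
Qed.

Lemma net_ex (n : nat) (P : finType) (L : {set {set P}}) (Pi : 'I_6 -> {set {set P}}) i p :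
  @is_net 6 n P L Pi -> exists2 l, l \in Pi i & p \in l.
Proof.
move=> Hn; have Hn' := Hn; move: Hn' => [[HP _ HL _] [_ _ Hc Hd _]].
have tr : trivIset (Pi i).
  apply/trivIsetP => A B HA HB; exact: (Hd _ _ _ HA HB).
have Hcov : cover (Pi i) = [set: P].
  apply/eqP; rewrite eqEcard subsetT /= cardsT.
  move: tr => /eqP <-.
  rewrite HP (eq_bigr (fun _ => n)); last by move=> l Hl; apply: HL; exact: net_sub Hn Hl.
  by rewrite sum_nat_const Hc expnS expn1.
have : p \in cover (Pi i) by rewrite Hcov.
by move/bigcupP => [l Hl Hpl]; exists l.
Qed.

Lemma net_tp (n : nat) (P : finType) (L : {set {set P}}) (Pi : 'I_6 -> {set {set P}}) R i l p :
  @is_net 6 n P L Pi -> l \in Pi i -> p \in l -> point_type Pi R p i = (l \in R).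
Proof.
move=> Hn Hl Hp; rewrite /point_type ffunE.
apply/existsP/idP => [[l' /andP [Hl' /andP [Hp' HR]]]|HR].
  by rewrite -(net_uniq Hn Hl' Hl Hp' Hp).
by exists l; rewrite Hl Hp HR.
Qed.
End S.

Definition cls (P : finType) (Pi : 'I_6 -> {set {set P}}) (l : {set P}) : 'I_6 :=
  odflt ord0 [pick i | l \in Pi i].

Lemma cls_spec (n : nat) (P : finType) (L : {set {set P}}) (Pi : 'I_6 -> {set {set P}}) k l :
  @is_net 6 n P L Pi -> l \in Pi k -> cls Pi l = k.
Proof.
move=> [_ [_ Hd _ _ _]] Hl; rewrite /cls; case: pickP => [i Hi|H]; last by rewrite H in Hl.
apply/eqP; apply/negPn/negP => ne.
by move: (disjointFr (Hd _ _ ne) Hi); rewrite Hl.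
Qed.

Lemma cls_in (n : nat) (P : finType) (L : {set {set P}}) (Pi : 'I_6 -> {set {set P}}) l :
  @is_net 6 n P L Pi -> l \in L -> l \in Pi (cls Pi l).
Proof.
move=> Hn; have Hn' := Hn; move: Hn' => [_ [HL _ _ _ _]].
rewrite HL => /bigcupP [k _ Hk]; by rewrite (cls_spec Hn Hk).
Qed.

Lemma tp_even (n : nat) (P : finType) (L : {set {set P}}) (Pi : 'I_6 -> {set {set P}}) R p :
  @is_net 6 n P L Pi -> is_relation L R -> ~~ odd #|[set i | point_type Pi R p i]|.
Proof.
move=> Hn [HRL HR].
have -> : [set i | point_type Pi R p i] = cls Pi @: [set l in R | p \in l].
  apply/setP => i; rewrite inE; apply/idP/imsetP.
    rewrite /point_type ffunE => /existsP [l /andP [Hl /andP [Hp HlR]]].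
    by exists l; [rewrite inE HlR Hp | rewrite (cls_spec Hn Hl)].
  move=> [l]; rewrite inE => /andP [HlR Hp] ->.
  have HlL : l \in L by apply: (subsetP HRL).
  by rewrite (net_tp R Hn (cls_in Hn HlL) Hp).
rewrite card_in_imset //.
move=> l1 l2; rewrite !inE => /andP [H1 p1] /andP [H2 p2] E.
have L1 : l1 \in L by apply: (subsetP HRL).
have L2 : l2 \in L by apply: (subsetP HRL).
have A1 := cls_in Hn L1; have A2 := cls_in Hn L2.
rewrite E in A1; exact: (net_uniq Hn A1 A2 p1 p2).
Qed.

Lemma Kij (n : nat) (P : finType) (L : {set {set P}}) (Pi : 'I_6 -> {set {set P}}) R i j :
  @is_net 6 n P L Pi -> i != j ->
  \sum_(p : P) ((-1) ^+ point_type Pi R p i * (-1) ^+ point_type Pi R p j : rat) =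
  (\sum_(l in Pi i) (-1) ^+ (l \in R)) * (\sum_(m in Pi j) (-1) ^+ (m \in R)).
Proof.
move=> Hn ij; have Hn' := Hn; move: Hn' => [_ [_ _ _ _ Hmeet]].
rewrite big_distrlr /=.
transitivity (\sum_(p : P) \sum_(l in Pi i) \sum_(m in Pi j)
   (if (p \in l) && (p \in m) then (-1) ^+ (l \in R) * (-1) ^+ (m \in R) else 0 : rat)).
  apply: eq_bigr => p _.
  have [l0 Hl0 Hp0] := net_ex i p Hn; have [m0 Hm0 Hq0] := net_ex j p Hn.
  rewrite (bigD1 l0) //= (bigD1 m0) //= Hp0 Hq0 /=.
  rewrite (net_tp R Hn Hl0 Hp0) (net_tp R Hn Hm0 Hq0).
  rewrite big1 ?addr0; last first.
    move=> m /andP [Hm ne]; case: ifP => // pm.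
    by move: ne; rewrite (net_uniq Hn Hm Hm0 pm Hq0) eqxx.
  rewrite big1 ?addr0 // => l /andP [Hl ne]; apply: big1 => m Hm.
  case: ifP => // /andP [pl _].
  by move: ne; rewrite (net_uniq Hn Hl Hl0 pl Hp0) eqxx.
rewrite exchange_big; apply: eq_bigr => l Hl.
rewrite exchange_big; apply: eq_bigr => m Hm.
rewrite -big_mkcond /=.
rewrite (eq_bigl (fun p => p \in l :&: m)); last by move=> p; rewrite inE.
by rewrite sumr_const (Hmeet _ _ _ _ ij Hl Hm).
Qed.

Lemma epsum (n : nat) (P : finType) (L : {set {set P}}) (Pi : 'I_6 -> {set {set P}}) (R : {set {set P}}) i :
  @is_net 6 n P L Pi ->
  \sum_(l in Pi i) ((-1) ^+ (l \in R) : rat) = n%:R - 2 * (rel_type Pi R i)%:R.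
Proof.
move=> [_ [_ _ Hc _ _]].
rewrite (eq_bigr (fun l => 1 - 2 * ((l \in R) : nat)%:R)); last first.
  by move=> l _; case: (l \in R); rewrite /= ?expr0 ?expr1; lra.
rewrite sumrB sumr_const Hc -mulr_sumr -natr_sum /rel_type.
congr (_ - 2 * _%:R).
rewrite -sum1_card big_mkcond /= [RHS]big_mkcond /=.
by apply: eq_bigr => l _; rewrite !inE andbC; case: (l \in R); case: (l \in Pi i).
Qed.

Lemma Gab (a b : {ffun 'I_6 -> bool}) : ~~ odd #|[set i | a i]| -> ~~ odd #|[set i | b i]| ->
 (((a == b) : nat) + ((a == bcompl b) : nat))%:R = 1/16 + 1/16 *
   \sum_(i < 6) \sum_(j < 6 | (i < j)%N) (-1) ^+ (b i + b j)%N * ((-1) ^+ a i * (-1) ^+ a j) :> rat.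
Proof.
move=> Ha Hb; pose c := [ffun i => a i (+) b i].
have Hc : ~~ odd #|[set i | c i]| by move: Ha Hb; rewrite !card6 !ffunE; exact: par12.
have E1 : (a == b) = (c == [ffun => false]).
  by rewrite !forall_ffun_eq; apply: eq_forallb => i; rewrite !ffunE; case: (a i); case: (b i).
have E2 : (a == bcompl b) = (c == [ffun => true]).
  by rewrite !forall_ffun_eq; apply: eq_forallb => i; rewrite !ffunE; case: (a i); case: (b i).
rewrite E1 E2 (Hcore Hc); congr (_ + _ * _); apply: eq_bigr => i _; apply: eq_bigr => j _.
rewrite !ffunE exprD; case: (a i); case: (b i); case: (a j); case: (b j);
  rewrite /= ?expr0 ?expr1; lra.
Qed.

Unset Implicit Arguments.
Theorem mainTheorem1 (n : nat) (P : finType) (L : {set {set P}})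
    (Pi : 'I_6 -> {set {set P}}) (R : {set {set P}})
    (b : {ffun 'I_6 -> bool}) :
  ~~ odd n ->
  @is_net 6 n P L Pi ->
  is_relation L R ->
  ~~ odd #|[set i | b i]| ->
  let g := fun i : 'I_6 => (n%:R / 2 - (rel_type Pi R i)%:R : rat) in
  ((t_count Pi R b + t_count Pi R (bcompl b))%N%:R : rat) =
    (n ^ 2)%N%:R / 16 +
    (1 / 4) * \sum_(i < 6) \sum_(j < 6 | (i < j)%N)
                 (-1) ^+ (b i + b j)%N * g i * g j.
Proof.
move=> _ Hn HR Hb g.
have [[HP _ _ _] _] := Hn.
have cnt : forall b', (#|[set p | point_type Pi R p == b']|)%:R
    = \sum_p ((point_type Pi R p == b') : nat)%:R :> rat.
  move=> b'; rewrite -sum1dep_card big_mkcond natr_sum /=.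
  by apply: eq_bigr => p _; case: (_ == _).
rewrite natrD /t_count !cnt -big_split /=.
rewrite (eq_bigr (fun p => 1/16 + 1/16 * \sum_(i<6) \sum_(j<6 | (i < j)%N)
   (-1) ^+ (b i + b j)%N * ((-1) ^+ point_type Pi R p i * (-1) ^+ point_type Pi R p j))); last first.
  by move=> p _; rewrite -natrD; apply: Gab => //; exact: tp_even Hn HR.
rewrite big_split /= sumr_const.
match goal with |- context [ (_ *+ ?c)%R ] => have HC : c = (n ^ 2)%N by rewrite -HP !cardT end. rewrite HC.
congr (_ + _); first by rewrite -mulr_natr; field.
rewrite -mulr_sumr exchange_big mulr_sumr [RHS]mulr_sumr; apply: eq_bigr => i _.
rewrite exchange_big !mulr_sumr; apply: eq_bigr => j ij.
have ij' : i != j by apply: contraTneq ij => ->; rewrite ltnn.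
rewrite -mulr_sumr (Kij R Hn ij') !(epsum R _ Hn) /g; field.
by [].
Qed.
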